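(* For every integer $k \geq 2$, the Nyldon factorization of the Fibonacci word $F_k$ is the two-term sequence $a,\ F_k[2..f_k]$. That is, $F_k = a\cdot F_k[2..f_k]$, both $a$ and $F_k[2..f_k]$ are Nyldon words, and $a \preceq F_k[2..f_k]$.
   Context: Strings are over the binary alphabet $\{a,b\}$ ordered by $a \prec b$, and $\prec$ also denotes the induced lexicographic order on strings: $x \prec y$ iff $x$ is a proper prefix of $y$, or there is $i$ with $x[1..i-1]=y[1..i-1]$ and $x[i]\prec y[i]$; $x\preceq y$ means $x\prec y$ or $x=y$. For a string $w$, $w[i..j]$ denotes the substring from position $i$ to position $j$ (1-indexed). Nyldon words are defined recursively: every string of length $1$ is a Nyldon word; a string $w$ with $|w|\ge 2$ is a Nyldon word iff there is no factorization $w=\gamma_1\cdots\gamma_m$ with $m\ge 2$, each $\gamma_i$ a nonempty Nyldon word, and $\gamma_1\preceq\gamma_2\preceq\cdots\preceq\gamma_m$. Every nonempty string $w$ has a unique factorization $w=\gamma_1\cdots\gamma_m$ into Nyldon words with $\gamma_i\preceq\gamma_{i+1}$ for all $i$; it is called the Nyldon factorization of $w$. Fibonacci words: $F_0=b$, $F_1=a$, $F_k=F_{k-1}F_{k-2}$ for $k\ge 2$; $f_k=|F_k|$. *)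

(* Defs.v *)
From mathcomp Require Import all_boot.
Set Implicit Arguments. Unset Strict Implicit. Unset Printing Implicit Defensive.

(* Binary alphabet {a,b} encoded as bool: a = false, b = true, so a < b. *)
Definition a : bool := false.
Definition b : bool := true.
Definition word := seq bool.

Definition letter_lt (c d : bool) : bool := ~~ c && d.

Fixpoint lexlt (x y : word) : bool :=
  match x, y with
  | [::], [::] => false
  | [::], _ :: _ => true
  | _ :: _, [::] => false
  | c :: x', d :: y' => letter_lt c d || ((c == d) && lexlt x' y')
  end.

Definition lexle (x y : word) : bool := lexlt x y || (x == y).

(* Nyldon words, by recursion on length (fuel = length of the word suffices,
   since every factor of a factorization with >= 2 nonempty factors is
   strictly shorter). *)
Fixpoint nyldonN (n : nat) (w : word) : Prop :=
  match n with
  | 0 => False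
  | n'.+1 =>
      size w = 1 \/
      (2 <= size w /\
       ~ exists gs : seq word,
           [/\ 2 <= size gs, flatten gs = w,
               all (fun g => g != [::]) gs,
               (forall g, g \in gs -> nyldonN n' g) &
               sorted lexle gs])
  end.

Definition nyldon (w : word) : Prop := nyldonN (size w) w.

Fixpoint fibw (k : nat) : word :=
  match k with
  | 0 => [:: b]
  | 1 => [:: a]
  | (k'.+1 as k1).+1 => fibw k1 ++ fibw k'
  end.

(* Main.v *)
Require Import Defs.
From mathcomp Require Import all_boot.
From Stdlib Require Import Classical.
From mathcomp Require Import zify.
Set Implicit Arguments. Unset Strict Implicit. Unset Printing Implicit Defensive.

Lemma lexlt_irr x : lexlt x x = false.
Proof. by elim: x => //= c x ->; case: c. Qed.

Lemma lexlt_trans x y z : lexlt x y -> lexlt y z -> lexlt x z.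
Proof.
elim: x y z => [|c x IH] [|d y] [|e z] //=.
by case: c; case: d; case: e => //=; rewrite /letter_lt /=; apply: IH.
Qed.

Lemma lexlt_total x y : [|| x == y, lexlt x y | lexlt y x].
Proof.
elim: x y => [|c x IH] [|d y] //=.
rewrite eqseq_cons.
by case: c; case: d => //=; rewrite /letter_lt /=.
Qed.

Lemma lexlt_prefix x y : y != [::] -> lexlt x (x ++ y).
Proof.
elim: x => [|c x IH] /=; first by case: y.
by move=> /IH ->; rewrite eqxx orbT.
Qed.

Lemma lexle_prefix x y : lexle x (x ++ y).
Proof.
case: y => [|d y]; first by rewrite cats0 /lexle eqxx orbT.
by rewrite /lexle lexlt_prefix.
Qed.

Lemma lexltW x y : lexlt x y -> lexle x y.
Proof. by rewrite /lexle => ->. Qed.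

Lemma lexle_refl x : lexle x x.
Proof. by rewrite /lexle eqxx orbT. Qed.

Lemma lexle_lt_trans x y z : lexle x y -> lexlt y z -> lexlt x z.
Proof. by case/orP => [H|/eqP ->] //; apply: lexlt_trans. Qed.

Lemma lexlt_le_trans x y z : lexlt x y -> lexle y z -> lexlt x z.
Proof. by move=> H; case/orP => [H2|/eqP <-] //; apply: lexlt_trans H H2. Qed.

Lemma lexle_trans x y z : lexle x y -> lexle y z -> lexle x z.
Proof.
move=> H; case/orP => [H2|/eqP <-] //; apply: lexltW; exact: lexle_lt_trans H H2.
Qed.

Lemma lexlt_nle x y : lexlt x y -> ~~ lexle y x.
Proof.
move=> H; apply/negP => H2. by move: (lexle_lt_trans H2 H); rewrite lexlt_irr.
Qed.

Lemma nle_lt x y : ~~ lexle x y -> lexlt y x.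
Proof.
rewrite /lexle negb_or => /andP [H1 H2].
by move: (lexlt_total x y); rewrite (negbTE H1) (negbTE H2).
Qed.

Lemma lexle_a w : w != [::] -> lexle [:: a] w.
Proof.
case: w => [|c w] // _; rewrite /lexle /=.
case: c => //=; case: w => //=.
Qed.


Definition facto (w : word) (gs : seq word) :=
  [/\ flatten gs = w, all (fun g => g != [::]) gs,
      (forall g, g \in gs -> nyldon g) & sorted lexle gs].

Lemma flatten_ne (gs : seq word) : all (fun g => g != [::]) gs -> gs != [::] -> flatten gs != [::].
Proof. by case: gs => [|g gs] //= /andP [H _] _; case: g H. Qed.

Lemma size_in_flatten (gs : seq word) g :
  g \in gs -> all (fun g => g != [::]) gs -> 2 <= size gs -> size g < size (flatten gs).
Proof.
case/splitPr => s1 s2 Ha Hs.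
have Hne: s1 ++ s2 != [::].
  by move: Hs; clear Ha; case: s1 => [|? ?] //; case: s2.
have: flatten (s1 ++ s2) != [::].
  apply: flatten_ne => //; move: Ha; rewrite !all_cat /= => /and3P [-> _ ->].
  done.
rewrite !flatten_cat /= -size_eq0 !size_cat.
move: (size (flatten s1)) (size (flatten s2)) (size g) => n1 n2 n3; lia.
Qed.

Lemma nyN_fuel n m g : size g <= n -> size g <= m -> (nyldonN n g <-> nyldonN m g).
Proof.
elim: n m g => [|n IH] [|m] g //=.
- by rewrite leqn0 => /nilP -> _ /=; split => // [[|[]]].
- by move=> _; rewrite leqn0 => /nilP -> /=; split => // [[|[]]].
- move=> Hn Hm.
  have Hin: forall gs, [/\ 2 <= size gs, flatten gs = g & all (fun g => g != [::]) gs] ->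
     forall h, h \in gs -> (nyldonN n h <-> nyldonN m h).
    move=> gs [H2 Hf Ha] h Hh.
    have := size_in_flatten Hh Ha H2; rewrite Hf => Hlt.
    by apply: IH; rewrite -ltnS; apply: leq_trans Hlt _.
  split=> [[H|[H2 H3]]|[H|[H2 H3]]]; [by left| |by left|].
  + right; split => //; case=> gs [Hs Hf Ha Hny Hso]; apply: H3; exists gs.
    by split => // h Hh; apply/(Hin gs) => //; apply: Hny.
  + right; split => //; case=> gs [Hs Hf Ha Hny Hso]; apply: H3; exists gs.
    by split => // h Hh; apply/(Hin gs) => //; apply: Hny.
Qed.

Lemma nyldonE w : nyldon w <->
  (size w = 1 \/ (2 <= size w /\ ~ exists gs, 2 <= size gs /\ facto w gs)).
Proof.
rewrite /nyldon; case Ew: (size w) => [|n] /=; rewrite ?Ew.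
  by split => // [[|[]]].
have Hin: forall gs, 2 <= size gs -> flatten gs = w -> all (fun g => g != [::]) gs ->
   forall h, h \in gs -> (nyldonN n h <-> nyldon h).
  move=> gs H2 Hf Ha h Hh.
  have := size_in_flatten Hh Ha H2; rewrite Hf Ew ltnS => Hlt.
  by apply: nyN_fuel.
split=> [[H|[H2 H3]]|[H|[H2 H3]]]; [by left| |by left|].
- right; split => //; case=> gs [Hs [Hf Ha Hny Hso]]; apply: H3; exists gs.
  by split => // h Hh; apply/(Hin gs) => //; apply: Hny.
- right; split => //; case=> gs [Hs Hf Ha Hny Hso]; apply: H3; exists gs.
  by split => //; split => // h Hh; apply/(Hin gs) => //; apply: Hny.
Qed.

Lemma nyldon_nil : ~ nyldon [::].
Proof. by move/nyldonE => [|[]]. Qed.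

Lemma nyldon_ne w : nyldon w -> w != [::].
Proof. by case: w => // /nyldon_nil. Qed.

Lemma nyldon1 w : size w = 1 -> nyldon w.
Proof. by move=> H; apply/nyldonE; left. Qed.

Lemma nyldon_fact w gs : nyldon w -> facto w gs -> 2 <= size gs -> False.
Proof.
move/nyldonE => [H|[_ H]] Hf Hs; last by apply: H; exists gs.
case: Hf => Ef Ha _ _.
case: gs Hs Ha Ef => [|g gs] // Hs Ha Ef.
have := size_in_flatten (mem_head g gs) Ha Hs; rewrite Ef H.
by move: Ha => /= /andP [] + _ Hlt; move: Hlt; case: (g).
Qed.

Lemma exists_fact w : w != [::] -> exists gs, facto w gs /\ gs != [::].
Proof.
move=> wne; case: (classic (nyldon w)) => H.
  exists [:: w]; split => //; split => //=; first by rewrite cats0.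
  - by rewrite wne.
  - by move=> g; rewrite inE => /eqP ->.
move/nyldonE: H => H.
apply: NNPP => Hn; apply H; right; split.
  clear Hn; case: w wne H => [|c [|d w]] //= _ H; exfalso; apply: H; by left.
case=> gs [H2 Hf]; apply: Hn; exists gs; split => //.
by case: gs H2 {Hf}.
Qed.


Lemma cat_split (g R x s : word) : g ++ R = x ++ s ->
  (exists x2, x = g ++ x2 /\ R = x2 ++ s) \/
  (exists y, g = x ++ y /\ s = y ++ R /\ y != [::]).
Proof.
elim: g x => [|c g IH] x /=; first by move=> ->; left; exists x.
case: x => [|d x] /=.
  by move=> <-; right; exists (c :: g).
case=> -> /IH [[x2 [-> ->]]|[y [-> [-> yne]]]].
  by left; exists x2.
by right; exists y.
Qed.

Lemma suffix_cmp (b s2 a s1 : word) : b ++ s2 = a ++ s1 -> size s1 <= size s2 ->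
  exists y, a = b ++ y /\ s2 = y ++ s1.
Proof.
move=> /cat_split [[x2 [E1 E2]]|[y [E1 [E2 yne]]]] Hs.
  by exists x2.
exfalso; move: Hs; rewrite E2 size_cat; case: y yne {E1 E2} => // c y _ /=.
move: (size y) (size s2) => n1 n2; lia.
Qed.

Lemma sorted_rcons_pre (s : seq word) y : sorted lexle (rcons s y) -> sorted lexle s.
Proof. by case: s => //= h s; rewrite rcons_path => /andP []. Qed.

Lemma sorted_rcons2 (s : seq word) y z :
  sorted lexle (rcons s y) -> lexle y z -> sorted lexle (rcons (rcons s y) z).
Proof.
case: s => [|h s] /=; first by move=> _ ->.
by rewrite !rcons_path last_rcons => -> ->.
Qed.

Lemma sorted_catE (s1 s2 : seq word) x y : sorted lexle (x :: s1) -> sorted lexle (y :: s2) ->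
  lexle (last x s1) y -> sorted lexle (x :: s1 ++ y :: s2).
Proof. by rewrite /= cat_path => -> /= -> ->. Qed.

Lemma fact_snoc w ds v : facto w ds -> ds != [::] -> lexle (last [::] ds) v -> nyldon v ->
  facto (w ++ v) (rcons ds v).
Proof.
move=> [Ef Ha Hn Hs] dne Hl Nv.
split.
- by rewrite flatten_rcons Ef.
- by rewrite all_rcons Ha (nyldon_ne Nv).
- by move=> g; rewrite mem_rcons inE => /orP [/eqP ->|/Hn].
- by case: ds dne Hs Hl {Ef Ha Hn} => // d ds _; rewrite /= rcons_path => -> ->.
Qed.

Lemma facto_ne w ds : facto w ds -> ds != [::] -> w != [::].
Proof. by case=> <- Ha _ _; apply: flatten_ne. Qed.

Lemma facto_last w es dl : facto w (rcons es dl) ->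
  [/\ w = flatten es ++ dl, nyldon dl, facto (flatten es) es, es != [::] -> flatten es != [::]
    & es != [::] -> lexle (last [::] es) dl].
Proof.
case=> Ef Ha Hn Hs; split.
- by rewrite -Ef flatten_rcons.
- by apply: Hn; rewrite mem_rcons mem_head.
- split => //.
  + by move: Ha; rewrite all_rcons => /andP [].
  + by move=> g Hg; apply: Hn; rewrite mem_rcons inE Hg orbT.
  + exact: sorted_rcons_pre Hs.
- by move=> H; apply: flatten_ne => //; move: Ha; rewrite all_rcons => /andP [].
- by clear Ef; case: es Ha Hn Hs => // e es _ _ /=; rewrite rcons_path => /andP [].
Qed.

Lemma size_rcons2 (s : seq word) x : (s != [::]) = (2 <= size (rcons s x)).
Proof. by rewrite size_rcons; case: s. Qed.

Definition Bn n := forall g t x, size g < n -> nyldon g -> nyldon t -> g = x ++ t ->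
  x != [::] -> lexlt t g.

Lemma facto_tail g rest : facto (flatten (g :: rest)) (g :: rest) ->
  [/\ facto (flatten rest) rest, nyldon g, g != [::] &
      (forall r rest', rest = r :: rest' -> lexle g r)].
Proof.
case=> _ /= /andP [gne Ha] Hn Hs; split => //.
- split => //; first by move=> h Hh; apply: Hn; rewrite inE Hh orbT.
  exact: path_sorted Hs.
- by apply: Hn; rewrite mem_head.
- by move=> r rest' E; move: Hs; rewrite E /= => /andP [].
Qed.

Lemma L_of_B n : Bn n -> forall gs x s, facto (flatten gs) gs -> size (flatten gs) < n ->
  flatten gs = x ++ s -> nyldon s -> size s <= size (last [::] gs).
Proof.
move=> HB; elim=> [|g rest IH] x s.
  by move=> _ _ /= /esym; case: x => // /= E; rewrite E => /nyldon_nil.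
move=> Hf Hsz E Ns.
have [Hfr Ng gne Hle] := facto_tail Hf.
have Hszg : size g < n.
  by apply: leq_ltn_trans Hsz; rewrite /= size_cat leq_addr.
move: (E); rewrite /= => /cat_split [[x2 [Ex ER]]|[y [Eg [Es yne]]]].
- case: rest IH Hf Hfr Hle E ER Hsz => [|r rest'] IH Hf Hfr Hle E ER Hsz.
    by move: ER => /= /esym; clear Ex; case: x2 => //= ER; move: Ns; rewrite ER => /nyldon_nil.
  rewrite /=. apply: (IH x2) => //.
  apply: leq_ltn_trans Hsz.
  by rewrite (_ : flatten (g :: _) = g ++ flatten (r :: rest')) // size_cat leq_addl.
- case: rest IH Hf Hfr Hle E Es Hsz => [|r rest'] IH Hf Hfr Hle E Es Hsz.
    by rewrite Es /= cats0 Eg size_cat leq_addl.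
  exfalso.
  case: (eqVneq x [::]) => [x0|xne].
    apply: (nyldon_fact Ns (gs := g :: r :: rest')) => //.
    by have ->: s = flatten [:: g, r & rest'] by rewrite E x0.
  have [ds [Hds dsne]] := exists_fact yne.
  case/lastP: ds Hds dsne => [|es dl] // Hds _.
  have [Ey Ndl Hes Hesne Hesl] := facto_last Hds.
  have Hlt : lexlt dl g.
    apply: (HB g dl (x ++ flatten es) Hszg Ng Ndl); first by rewrite Eg Ey catA.
    by case: (x) xne.
  have Hdr : lexle dl r := lexle_trans (lexltW Hlt) (Hle r rest' erefl).
  apply: (nyldon_fact Ns (gs := rcons es dl ++ r :: rest')).
  + case: Hds => Ef Ha Hn Hs; case: Hfr => Efr Har Hnr Hsr; split.
    * by rewrite flatten_cat Ef Es.
    * by rewrite all_cat Ha Har.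
    * by move=> h; rewrite mem_cat => /orP [/Hn|/Hnr].
    * case: es {Ey Hes Hesne Hesl Ef} Ha Hn Hs => [|e es] Ha Hn Hs /=.
        by rewrite Hdr.
      move: (sorted_catE (s1 := rcons es dl) (s2 := rest') Hs Hsr).
      by rewrite last_rcons => /(_ Hdr).
  + by rewrite size_cat size_rcons /=; move: (size es) (size rest') => p q; lia.
Qed.

Lemma rcons_ne (s : seq word) x : rcons s x != [::].
Proof. by rewrite -size_eq0 size_rcons. Qed.

Lemma B_step n : Bn n -> Bn n.+1.
Proof.
move=> HB.
have HL := L_of_B HB.
suff main: forall k x t g, size x <= k -> size g = n -> nyldon g -> nyldon t ->
    g = x ++ t -> x != [::] -> lexlt t g.
  move=> g t x; rewrite ltnS leq_eqVlt => /orP [/eqP Hn|Hlt]; last exact: HB.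
  move=> Ng Nt E xne; exact: (main (size x) x t g (leqnn _) Hn Ng Nt E xne).
elim=> [|k IHk] x t g Hx Hg Ng Nt E xne.
  by move: Hx xne; rewrite leqn0 size_eq0 => /eqP ->.
have [as_ [Has asne]] := exists_fact xne.
case/lastP: as_ Has asne => [|bs al] // Has _.
have [Ex Nal Hbs Hbsne Hbsl] := facto_last Has.
case: (boolP (lexle al t)) => [Halt|/nle_lt Htal].
  exfalso; apply: (nyldon_fact Ng (gs := rcons (rcons bs al) t)).
    rewrite E; apply: fact_snoc => //; [exact: rcons_ne | by rewrite last_rcons].
  by rewrite !size_rcons.
case: (eqVneq bs [::]) => [bs0|bsne].
  apply: (lexlt_le_trans Htal).
  by rewrite E Ex bs0 /=; apply: lexle_prefix.
have fbs := Hbsne bsne.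
have tne := nyldon_ne Nt.
have vne : al ++ t != [::] by case: (al) (nyldon_ne Nal).
have [cs [Hcs csne]] := exists_fact vne.
case/lastP: cs Hcs csne => [|ds bq] // Hcs _.
have [Ev Nbq Hds Hdsne Hdsl] := facto_last Hcs.
have Hvn : size (al ++ t) < n.
  rewrite -Hg E Ex -catA !size_cat; move: fbs; rewrite -size_eq0.
  move: (size (flatten bs)) (size al) (size t) => p q r; lia.
have Hst : size t <= size bq.
  have Ef : flatten (rcons ds bq) = al ++ t by case: Hcs.
  have := HL (rcons ds bq) al t.
  by rewrite last_rcons Ef; apply.
have [y [Ey Ebq]] := suffix_cmp (b := flatten ds) (s2 := bq) (a := al) (s1 := t)
  (esym Ev) Hst.
case: (eqVneq y [::]) => [y0|yne].
  exfalso; move: Ey Ebq; rewrite y0 cats0 /= => Ey Ebq.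
  case: ds Hds Hdsl Ey {Ev Hcs Hdsne} => [|d [|d2 ds]] Hds Hdsl Ey.
  - by move: Nal; rewrite Ey => /nyldon_nil.
  - have Ed : d = al by rewrite Ey /= cats0.
    by move: (Hdsl isT); rewrite /= Ebq Ed; move/negP: (lexlt_nle Htal).
  - by apply: (nyldon_fact (w := al) (gs := [:: d, d2 & ds])) => //; rewrite Ey.
have Hbqlt : lexlt t bq.
  apply: (HB bq t y) => //.
  by apply: leq_ltn_trans Hvn; rewrite Ev size_cat leq_addl.
have Hbqg : lexlt bq g.
  apply: (IHk (flatten bs ++ flatten ds) bq g) => //.
  - rewrite -ltnS; apply: leq_trans Hx; rewrite Ex Ey !size_cat; move: yne; rewrite -size_eq0.
    move: (size (flatten bs)) (size (flatten ds)) (size y) => p q r; lia.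
  - by rewrite E Ex Ey Ebq !catA.
  - by case: (flatten bs) fbs.
exact: lexlt_trans Hbqlt Hbqg.
Qed.

Lemma B_all n : Bn n.
Proof. by elim: n => [|n IH]; [move=> g t x | exact: B_step]. Qed.

Lemma nyldon_suffix g t x : nyldon g -> nyldon t -> g = x ++ t -> x != [::] -> lexlt t g.
Proof. by move=> Ng Nt E xne; exact: (@B_all (size g).+1 g t x (ltnSn _) Ng Nt E xne). Qed.

Lemma L_all gs x s : facto (flatten gs) gs ->
  flatten gs = x ++ s -> nyldon s -> size s <= size (last [::] gs).
Proof. by move=> H; apply: (L_of_B (@B_all (size (flatten gs)).+1)). Qed.


Definition Sx (u v : word) := forall x s, u = x ++ s -> x != [::] -> nyldon s -> lexle s v.

Lemma hall u v : nyldon u -> nyldon v -> lexlt v u -> Sx u v -> nyldon (u ++ v).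
Proof.
move=> Nu Nv Hvu Suv.
have une := nyldon_ne Nu; have vne := nyldon_ne Nv.
apply/nyldonE; right; split.
  rewrite size_cat; move: une vne; rewrite -!size_eq0.
  move: (size u) (size v) => p q; lia.
case=> gs [H2 Hf].
case/lastP: gs H2 Hf => [|hs gm] // H2 Hf.
have [Ew Ngm Hhs Hhsne Hhsl] := facto_last Hf.
have Ef : flatten (rcons hs gm) = u ++ v by case: Hf.
have Hsz : size v <= size gm.
  by move: (@L_all (rcons hs gm) u v); rewrite Ef last_rcons; apply.
have hsne : hs != [::] by move: H2; rewrite size_rcons; case: (hs).
have [y [Ey Egm]] := suffix_cmp (b := flatten hs) (s2 := gm) (a := u) (s1 := v)
  (esym Ew) Hsz.
case: (eqVneq y [::]) => [y0|yne].
  move: Ey Egm; rewrite y0 cats0 /= => Ey Egm.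
  case: hs Hhs Hhsl Ey {H2 Hf Ew Ef hsne Hhsne} => [|h [|h2 hs]] Hhs Hhsl Ey.
  - by move: Nu; rewrite Ey => /nyldon_nil.
  - move: (Hhsl isT); rewrite /= Egm (_ : h = u); last by rewrite Ey /= cats0.
    by move/negP: (lexlt_nle Hvu).
  - by apply: (nyldon_fact Nu (gs := [:: h, h2 & hs])) => //; rewrite Ey.
have [ds [Hds dsne]] := exists_fact yne.
case/lastP: ds Hds dsne => [|es dl] // Hds _.
have [Ey2 Ndl _ _ _] := facto_last Hds.
have Hdl : lexle dl v.
  apply: (Suv (flatten hs ++ flatten es) dl) => //.
    by rewrite Ey Ey2 catA.
  by case: (flatten hs) (Hhsne hsne).
apply: (nyldon_fact Ngm (gs := rcons (rcons es dl) v)).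
  by rewrite Egm; apply: fact_snoc => //; [exact: rcons_ne | rewrite last_rcons].
by rewrite !size_rcons.
Qed.

Lemma hall_S u z : nyldon z -> Sx u z -> Sx (u ++ z) z.
Proof.
move=> Nz Suz x s E xne Ns.
case: (leqP (size s) (size z)) => Hs.
  have [y [Ex Ez]] := suffix_cmp (b := u) (s2 := z) (a := x) (s1 := s) E Hs.
  case: (eqVneq y [::]) => [y0|yne].
    by rewrite Ez y0; exact: lexle_refl.
  exact: lexltW (nyldon_suffix Nz Ns Ez yne).
have [y [Eu Es]] := suffix_cmp (b := x) (s2 := s) (a := u) (s1 := z) (esym E) (ltnW Hs).
have yne : y != [::].
  by apply/negP => /eqP y0; move: Hs; rewrite Es y0 /= ltnn.
have [ds [Hds dsne]] := exists_fact yne.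
case/lastP: ds Hds dsne => [|es dl] // Hds _.
have [Ey2 Ndl _ _ _] := facto_last Hds.
have Hdl : lexle dl z.
  apply: (Suz (x ++ flatten es) dl) => //.
    by rewrite Eu Ey2 catA.
  by case: (x) xne.
exfalso; apply: (nyldon_fact Ns (gs := rcons (rcons es dl) z)).
  by rewrite Es; apply: fact_snoc => //; [exact: rcons_ne | rewrite last_rcons].
by rewrite !size_rcons.
Qed.

Lemma Sx_mono u z z' : Sx u z -> lexle z z' -> Sx u z'.
Proof. by move=> H Hz x s E xne Ns; apply: lexle_trans (H x s E xne Ns) Hz. Qed.

Lemma Sx_drop u v : (forall i, 0 < i -> lexle (drop i u) v) -> Sx u v.
Proof.
move=> H x s E xne _; have := H (size x); rewrite E drop_size_cat //; apply.
by rewrite lt0n size_eq0.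
Qed.

Definition gw k := drop 1 (fibw k).
Definition hw k := gw k ++ [:: a].

Lemma fib_head k : fibw k.+1 = a :: gw k.+1.
Proof.
elim: k => [|k IH] //.
have E : fibw k.+2 = fibw k.+1 ++ fibw k by [].
by rewrite /gw E IH /= drop0.
Qed.

Lemma gw_rec k : gw k.+3 = hw k.+2 ++ gw k.+1.
Proof.
have E : fibw k.+3 = (a :: gw k.+2) ++ (a :: gw k.+1) by rewrite -!fib_head.
by rewrite {1}/gw E /= drop0 /hw -catA.
Qed.

Lemma hw_rec k : hw k.+3 = hw k.+2 ++ hw k.+1.
Proof. by rewrite {1}/hw gw_rec /hw -!catA. Qed.

Lemma hw_ne k : hw k != [::].
Proof. by rewrite /hw; case: (gw k). Qed.

Lemma hw_inv j : [/\ nyldon (hw j.+2), nyldon (hw j.+1), lexlt (hw j.+1) (hw j.+2)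
  & Sx (hw j.+2) (hw j.+1)].
Proof.
elim: j => [|j [N2 N1 Hlt S]].
  have -> : hw 2 = [:: b] ++ [:: a] by [].
  have -> : hw 1 = [:: a] by [].
  split => //.
  - apply: hall => //; try exact: nyldon1.
    by apply: Sx_drop => -[|i].
  - exact: nyldon1.
  - by apply: Sx_drop => -[|[|i]].
rewrite (hw_rec j); split => //.
- exact: hall.
- exact: lexlt_prefix (hw_ne _).
- exact: Sx_mono (hall_S N1 S) (lexltW Hlt).
Qed.

Lemma gw_ny2 j : nyldon (gw j.+2) /\ nyldon (gw j.+3).
Proof.
elim: j => [|j [A B]].
  split; first exact: nyldon1.
  by have [N2 _ _ _] := hw_inv 0.
split => //.
rewrite (gw_rec j.+1).
have [N3 _ _ _] := hw_inv j.+1.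
have [N2 N1 Hlt S] := hw_inv j.
apply: hall => //.
  by rewrite (hw_rec j) /hw -catA; apply: lexlt_prefix.
rewrite (hw_rec j); apply: Sx_mono (hall_S N1 S) _.
case: j {A B N3 N2 N1 Hlt S} => [|j] //.
by rewrite (gw_rec j); apply: lexle_prefix.
Qed.

Theorem theorem1 (k : nat) : 2 <= k ->
  [/\ fibw k = a :: drop 1 (fibw k),
      nyldon [:: a],
      nyldon (drop 1 (fibw k)) &
      lexle [:: a] (drop 1 (fibw k))].
Proof.
case: k => [|[|j]] // _.
have [H _] := gw_ny2 j.
split.
- exact: (fib_head j.+1).
- exact: nyldon1.
- exact: H.
- exact: lexle_a (nyldon_ne H).
Qed.
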